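(* For every $k\ge1$, every $\sigma\in S_k$ and every real $x>2k^2$, $$\sum_{\rho\in S_k\text{ a }k\text{-cycle}}x^{-|\sigma\rho^{-1}|}\le 2\,\frac{(k-1)!}{(k-|\mathsf{cyc}(\sigma)|+1)!}\,k^{|\mathsf{cyc}(\sigma)|}\,x^{-|\mathsf{cyc}(\sigma)|+1}.$$
   Context: $S_k$ is the symmetric group on $\{1,\dots,k\}$; $\mathsf{cyc}(\sigma)$ is the set of cycles of $\sigma$ (fixed points included). The Cayley weight $|\sigma|$ of $\sigma\in S_k$ is the minimum number of transpositions whose product is $\sigma$; equivalently $|\sigma|=k-|\mathsf{cyc}(\sigma)|$. *)

(* Defs.v *)
From mathcomp Require Import all_boot all_order all_algebra all_fingroup.
Set Implicit Arguments. Unset Strict Implicit. Unset Printing Implicit Defensive.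

(* cyc(s): the set of cycles of s (fixed points included) = porbits s *)
Definition ncyc (k : nat) (s : 'S_k) : nat := #|porbits s|.

Definition cayley_weight (k : nat) (s : 'S_k) : nat := k - ncyc s.

Definition is_kcycle (k : nat) (r : 'S_k) : bool :=
  porbits r == [set [set: 'I_k]].

(* Main.v *)
Require Import Defs.
From mathcomp Require Import all_boot all_order all_algebra all_fingroup.
From mathcomp Require Import zify ring lra.
Import Order.TTheory GRing.Theory Num.Theory.
Section Comb.
Variable k : nat.
Implicit Types (s a b r sigma : 'S_k).

Lemma ncyc_le s : ncyc s <= k.
Proof. by rewrite /ncyc /porbits; apply: leq_trans (leq_imset_card _ _) _; rewrite card_ord. Qed.

Lemma ncyc_tperm x y s :
  ncyc (tperm x y * s) <= (ncyc s).+1 /\ ncyc s <= (ncyc (tperm x y * s)).+1.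
Proof.
have := porbits_mul_tperm s x y; rewrite /ncyc /=.
case: (eqVneq x y) => [->|nxy]; first by rewrite tperm1 mul1g; lia.
case: (x \in porbit s y) => /= H; move: H; rewrite /nat_of_bool /= -?mul2n => H; lia.
Qed.

Lemma tperm_dec s : s != 1%g ->
  exists x y, x != y /\ ncyc (tperm x y * s) = (ncyc s).+1.
Proof.
move=> ns.
have [x sx] : exists x, s x != x.
  apply/existsP; apply: contraR ns => /existsPn H.
  by apply/eqP/permP => z; rewrite perm1; apply/eqP; have := H z; rewrite negbK.
exists x, (s x); split; first by rewrite eq_sym.
have := porbits_mul_tperm s x (s x); rewrite /ncyc /=.
have -> : x \in porbit s (s x).
  by rewrite porbit_sym -{1}(expg1 s) mem_porbit.
by rewrite eq_sym sx /=; lia.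
Qed.

Lemma ncyc1 : ncyc (1%g : 'S_k) = k.
Proof.
rewrite /ncyc /porbits card_imset ?card_ord // => x y /eqP.
rewrite eq_porbit_mem => /porbitP [i ->]; by rewrite expg1n perm1.
Qed.

Lemma weight_sub a b :
  cayley_weight (a * b)%g <= cayley_weight a + cayley_weight b.
Proof.
rewrite /cayley_weight.
suff H : forall n a, k - ncyc a <= n -> k - ncyc (a * b)%g <= k - ncyc a + (k - ncyc b).
  exact: (H _ a (leqnn _)).
elim=> [|n IH] {}a Ha.
  have : ncyc a = k by have := ncyc_le a; lia.
  case: (eqVneq a 1%g) => [-> _|na]; first by rewrite mul1g; lia.
  have [x [y [_ E]]] := tperm_dec _ na; have := ncyc_le (tperm x y * a); lia.
case: (eqVneq a 1%g) => [->|na]; first by rewrite mul1g; lia.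
have [x [y [_ E]]] := tperm_dec _ na.
have Hn : k - ncyc (tperm x y * a) <= n by have := ncyc_le (tperm x y * a); lia.
have := IH _ Hn.
have -> : (a * b = tperm x y * ((tperm x y * a) * b))%g.
  by rewrite !mulgA tperm2 mul1g.
have [h1 h2] := ncyc_tperm x y (tperm x y * a * b)%g.
have := ncyc_le (tperm x y * a * b)%g; have := ncyc_le (tperm x y * (tperm x y * a * b))%g.
have := ncyc_le a; have := ncyc_le (tperm x y * a); lia.
Qed.

Lemma ncycV s : ncyc (s^-1)%g = ncyc s.
Proof. by rewrite /ncyc porbitsV. Qed.

Lemma kcycle_ncyc r : is_kcycle r -> ncyc r = 1.
Proof. by rewrite /is_kcycle /ncyc => /eqP ->; rewrite cards1. Qed.

Lemma weight_lb sigma r : is_kcycle r ->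
  (ncyc sigma).-1 <= cayley_weight (sigma * r^-1)%g.
Proof.
move=> kr; have := weight_sub (sigma^-1)%g (sigma * r^-1)%g.
rewrite mulgA mulVg mul1g /cayley_weight !ncycV kcycle_ncyc //.
have := ncyc_le sigma; have := ncyc_le (sigma * r^-1)%g.
lia.
Qed.
Definition Tr : {set 'S_k} :=
  [set tperm (tnth u ord0) (tnth u ord_max) | u in [set u : 2.-tuple 'I_k | sorted ltn (map val u)]].

Lemma Tr_card : #|Tr| <= 'C(k, 2).
Proof. by rewrite -card_ltn_sorted_tuples leq_imset_card. Qed.

Lemma Tr_mem x y : x != y -> tperm x y \in Tr.
Proof.
wlog lxy : x y / (x < y)%N.
  move=> W nxy; case: (ltngtP x y) => [h|h|h]; first exact: W.
    by rewrite tpermC; apply: W => //; rewrite eq_sym.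
  by move: nxy; rewrite (val_inj h) eqxx.
move=> _; apply/imsetP; exists [tuple x; y] => //.
by rewrite inE /= andbT.
Qed.

Lemma F_card d : #|[set s : 'S_k | cayley_weight s == d]| <= 'C(k, 2) ^ d.
Proof.
elim: d => [|d IH].
  rewrite expn0 -(cards1 (1%g : 'S_k)); apply: subset_leq_card.
  apply/subsetP => s; rewrite !inE /cayley_weight => /eqP H.
  case: (eqVneq s 1%g) => // ns.
  have [x [y [_ E]]] := tperm_dec _ ns.
  have := ncyc_le (tperm x y * s); lia.
apply: (leq_trans (n := #|[set (p.1 * p.2)%g | p in setX Tr [set s : 'S_k | cayley_weight s == d]]|)).
  apply: subset_leq_card; apply/subsetP => s; rewrite inE /cayley_weight => /eqP H.
  have ns : s != 1%g by apply/eqP => e; move: H; rewrite e ncyc1 subnn.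
  have [x [y [nxy E]]] := tperm_dec _ ns.
  apply/imsetP; exists (tperm x y, tperm x y * s)%g.
    rewrite !inE /= Tr_mem //= /cayley_weight; apply/eqP.
    have := ncyc_le (tperm x y * s); lia.
  by rewrite /= mulgA tperm2 mul1g.
apply: leq_trans (leq_imset_card _ _) _.
by rewrite cardsX expnS leq_mul // Tr_card.
Qed.
End Comb.
Lemma fact_le k n : n < k -> n.+1`! <= k ^ n.
Proof.
elim: n => [|n IH] h; first by rewrite expn0.
rewrite factS expnS leq_mul //; try lia; apply: IH; lia.

Qed.

Lemma bin2E k : 'C(k, 2) * 2 = k * k.-1.
Proof. by rewrite -[2]/(2`!) bin_ffact ffactnS ffactn1. Qed.

Lemma nat_caseB k j : 2 * j.+1 <= k ->
  'C(k, 2) ^ j * (k - j)`! <= (k.-1)`! * k ^ j.+1.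
Proof.
elim: j => [|j IH] h.
  case: k h => // k _; by rewrite expn0 mul1n subn0 factS expn1 mulnC.
have IH' := IH ltac:(lia).
have ek : (k - j) = (k - j.+1).+1 by lia.
rewrite ek factS in IH'.
have hC := bin2E k.
have : 'C(k, 2) <= k * (k - j.+1).+1.
  have : 'C(k,2) * 2 <= k * (k - j.+1).+1 * 2; last by rewrite leq_pmul2r.
  by rewrite hC; nia.
move=> hC2.
rewrite -(@leq_pmul2l (k - j.+1).+1) //.
apply: (leq_trans (n := 'C(k,2) * ('C(k, 2) ^ j * ((k - j.+1).+1 * (k - j.+1)`!)))).
  by rewrite expnS; nia.
apply: (leq_trans (n := 'C(k,2) * ((k.-1)`! * k ^ j.+1))).
  by rewrite leq_mul2l IH' orbT.
rewrite (expnS k j.+1).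
by nia.
Qed.
Local Open Scope ring_scope.
Lemma geom (R : realFieldType) (q : R) : 0 <= q -> 4 * q <= 1 ->
  forall N m, 3 * \sum_(d < N) (if (m <= d)%N then q ^+ d else 0) <= 4 * q ^+ m.
Proof.
move=> q0 q1; elim=> [|N IH] m.
  by rewrite big_ord0 mulr0 mulr_ge0 ?exprn_ge0.
rewrite big_ord_recl /=.
have E : forall m', \sum_(i < N) (if (m'.+1 <= bump 0 i)%N then q ^+ bump 0 i else 0)
   = q * \sum_(i < N) (if (m' <= i)%N then q ^+ i else 0).
  move=> m'; rewrite mulr_sumr; apply: eq_bigr => i _.
  by rewrite /bump /= add1n ltnS exprS; case: ifP; rewrite ?mulr0.
case: m => [|m'].
  have E0 : \sum_(i < N) (if (0 <= bump 0 i)%N then q ^+ bump 0 i else 0)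
     = q * \sum_(i < N) (if (0 <= i)%N then q ^+ i else 0).
    rewrite mulr_sumr; apply: eq_bigr => i _.
    by rewrite /bump /= add1n exprS.
  rewrite E0 /= expr0; have := IH 0%N; rewrite expr0 => h; nra.
rewrite E /= exprS add0r.
have := IH m'; nra.
Qed.

Section Part.
Variable (R : realFieldType) (k : nat).
Lemma partition_w (G : nat -> R) :
  \sum_(t : 'S_k) G (cayley_weight t) =
  \sum_(d < k.+1) #|[set s : 'S_k | cayley_weight s == d]|%:R * G d.
Proof.
rewrite (partition_big (fun t : 'S_k => (inord (cayley_weight t) : 'I_k.+1)) predT) //.
apply: eq_bigr => d _.
have wle : forall t : 'S_k, (cayley_weight t < k.+1)%N.
  by move=> t; rewrite ltnS /cayley_weight leq_subr.
transitivity (\sum_(t in [set s : 'S_k | cayley_weight s == d]) G d).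
  apply: eq_big => [t|t /eqP H]; last by rewrite -H inordK.
  rewrite inE /=; apply/eqP/eqP => [<-|->]; first by rewrite inordK.
  by apply: val_inj; rewrite /= inordK.
by rewrite sumr_const mulr_natl.
Qed.
End Part.

Lemma fin_ineq (R : realFieldType) (T1 T2 T3 : R) :
  3 * T1 <= 4 * T2 -> T2 <= T3 -> 0 <= T3 -> T1 <= 2 * T3.
Proof. move=> *; lra. Qed.

Theorem lemma5p11 (R : realFieldType) (k : nat) (sigma : 'S_k) (x : R) :
  (1 <= k)%N -> 2 * (k ^ 2)%:R < x ->
  \sum_(rho : 'S_k | is_kcycle rho) x ^- cayley_weight (sigma * rho^-1)%g
  <= 2 * (k.-1)`!%:R / (k - ncyc sigma + 1)`!%:R * (k ^ ncyc sigma)%:R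
       * x ^- (ncyc sigma) * x.
Proof.
move=> k1 hx.
have c1 : (1 <= ncyc sigma)%N.
  rewrite /ncyc card_gt0; apply/set0Pn; exists (porbit sigma (Ordinal k1)).
  exact: imset_f.
have ck := ncyc_le k sigma.
set c := ncyc sigma in c1 ck *.
set m := c.-1.
have cm : c = m.+1 by rewrite /m; lia.
have x1 : 1 < x.
  have : (1 <= (k ^ 2)%:R :> R) by rewrite ler1n expn_gt0 k1.
  lra.
have x0 : 0 < x by lra.
have Xpos : 0 < x ^- m by rewrite invr_gt0 exprn_gt0.
have ex : x ^- c * x = x ^- m.
  by rewrite cm exprS invfM mulrAC mulVf ?mul1r // gt_eqF.
rewrite -mulrA ex.
set A := (k.-1)`!%:R; set K := (k ^ c)%:R; set F2 := (k - c + 1)`!%:R.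
have F2pos : 0 < F2 by rewrite ltr0n fact_gt0.
set S := \sum_(rho | _) _.
have wpos : forall n, 0 <= x ^- n :> R by move=> n; rewrite invr_ge0 exprn_ge0 // ltW.
case: (leqP k.+1 (2 * c)) => hc.
  apply: (le_trans (y := k`!%:R * x ^- m)).
    apply: (le_trans (y := \sum_(rho : 'S_k | is_kcycle rho) x ^- m)).
      apply: ler_sum => rho kc.
      rewrite lef_pV2 ?posrE ?exprn_gt0 // ler_eXn2l //.
      exact: weight_lb.
    rewrite sumr_const -[x ^- m *+ _]mulr_natl; apply: ler_wpM2r => //; rewrite ler_nat -card_Sn.
    exact: max_card.
  rewrite ler_pM2r // mulrAC ler_pdivlMr // /A /K /F2 -!natrM ler_nat.
  have h1 : ((k - c + 1)`! <= k ^ (k - c))%N by rewrite addn1; apply: fact_le; lia.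
  have h2 : (k ^ (k - c) <= k ^ m)%N by rewrite leq_pexp2l //; lia.
  case: (k) k1 h1 h2 => // k' _ h1 h2.
  have h3 := leq_trans h1 h2.
  rewrite factS /= cm expnS; rewrite cm in h3.
  apply: leq_trans (_ : (k'.+1 * k'`! * k'.+1 ^ m <= _)%N).
    by rewrite leq_mul2l h3 orbT.
  set f := k'`!; set P := (k'.+1 ^ m)%N; nia.
set C := 'C(k, 2).
set q := (C%:R : R) / x.
have q0 : 0 <= q by rewrite divr_ge0 // ltW.
have q1 : 4 * q <= 1.
  rewrite /q mulrA ler_pdivrMr // mul1r.
  have : (4 * C <= 2 * k ^ 2)%N.
    rewrite /C; have := bin2E k; case: (k) k1 => // k' _ /=; rewrite expnS expn1; nia.
  move=> h; have h' : ((4 * C)%:R <= (2 * k ^ 2)%:R :> R) by rewrite ler_nat.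
  rewrite !natrM in h'; apply: (le_trans h'); apply: ltW; by rewrite -expr2 -natrX.
pose G (d : nat) := if (m <= d)%N then x ^- d else 0.
have hS : 3 * S <= 4 * q ^+ m.
  apply: (le_trans _ (@geom R q q0 q1 k.+1 m)).
  rewrite ler_pM2l //.
  apply: (le_trans (y := \sum_(rho : 'S_k) G (cayley_weight (sigma * rho^-1)%g))).
    rewrite /S big_mkcond /=; apply: ler_sum => rho _.
    case: ifP => kc; first by rewrite /G (weight_lb k sigma _ kc).
    by rewrite /G; case: ifP.
  rewrite (reindex (fun t : 'S_k => t^-1 * sigma)%g) /=; last first.
    exists (fun r : 'S_k => sigma * r^-1)%g => r _ /=.
      by rewrite invMg invgK mulgA mulgV mul1g.
    by rewrite invMg invgK -mulgA mulVg mulg1.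
  under eq_bigr => t _ do rewrite invMg invgK mulgA mulgV mul1g.
  rewrite partition_w; apply: ler_sum => d _.
  rewrite /G; case: ifP => hm; last by rewrite mulr0.
  apply: (le_trans (y := (C ^ d)%:R * x ^- d)).
    by rewrite ler_wpM2r ?wpos // ler_nat F_card.
  by rewrite /q natrX exprMn exprVn.
have hN : (C ^ m * (k - c + 1)`! <= (k.-1)`! * k ^ c)%N.
  have e : (k - m = k - c + 1)%N by lia.
  have := nat_caseB k m ltac:(lia); rewrite e -cm; exact.
have hN' : (C ^ m)%:R * F2 <= A * K by rewrite /F2 /A /K -!natrM ler_nat.
have eq4 : q ^+ m = (C ^ m)%:R * x ^- m by rewrite /q natrX exprMn exprVn.
rewrite eq4 in hS.
have -> : 2 * A / F2 * K * x ^- m = (2 * A * K * x ^- m) / F2.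
  by rewrite [2 * A / F2 * K]mulrAC [2 * A * K / F2 * _]mulrAC.
rewrite ler_pdivlMr //.
set Cm := (C ^ m)%:R in hS hN'; set X := x ^- m in hS Xpos *.
have Cm0 : 0 <= Cm by rewrite ler0n.
have h1 : 3 * S * F2 <= 4 * (Cm * X) * F2 by apply: ler_wpM2r => //; exact: ltW.
have h2 : Cm * F2 * X <= A * K * X by apply: ler_wpM2r => //; exact: ltW.
have e1 : 3 * S * F2 = 3 * (S * F2) by rewrite mulrA.
have e2 : 4 * (Cm * X) * F2 = 4 * (Cm * F2 * X) by rewrite -!mulrA [X * F2]mulrC.
have e3 : 2 * A * K * X = 2 * (A * K * X) by rewrite !mulrA.
rewrite e1 e2 in h1; rewrite e3.
have h3 : 0 <= A * K * X by rewrite !mulr_ge0 ?ler0n // ltW.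
exact: fin_ineq h1 h2 h3.
Qed.
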